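(* For every integer $n\ge 1$, the resistance distance in the ladder graph $L_n$ (unit edge resistances) satisfies \[ r_{L_n}(1,2)=r_{L_n}(2n-1,2n)=\frac{(2+\sqrt3)^n(\sqrt3-1)+(2-\sqrt3)^n(\sqrt3+1)}{(2+\sqrt3)^n-(2-\sqrt3)^n}. \]
   Context: The ladder graph $L_n$ has vertex set $\{1,\dots,2n\}$ and edges $\{2k-1,2k\}$ for $k=1,\dots,n$, together with $\{2k-1,2k+1\}$ and $\{2k,2k+2\}$ for $k=1,\dots,n-1$; each edge has resistance $1$. The resistance distance $r_G(u,v)$ is the potential difference between $u$ and $v$ when one unit of current enters at $u$ and leaves at $v$; equivalently $r_G(u,v)=(\mathbf e_u-\mathbf e_v)^T L^\dagger(\mathbf e_u-\mathbf e_v)$ with $L$ the combinatorial Laplacian of $G$. *)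

(* Defs.v *)
From HB Require Import structures.
From mathcomp Require Import all_boot all_order all_algebra.
Set Implicit Arguments. Unset Strict Implicit. Unset Printing Implicit Defensive.
Import Order.TTheory GRing.Theory Num.Theory.
Local Open Scope ring_scope.

(* Vertices of L_n are 'I_(2*n); the ordinal i represents vertex label i+1,
   so labels range over {1,...,2n} as in the paper. *)

Definition is_pair (u v a b : nat) : bool :=
  ((u == a) && (v == b)) || ((u == b) && (v == a)).

Definition ladder_adj (n : nat) (i j : 'I_(2 * n)) : bool :=
  let u := i.+1 in let v := j.+1 in
  [exists k : 'I_n, let k' := k.+1 in
     [|| is_pair u v (2 * k').-1 (2 * k'),
         (k' < n)%N && is_pair u v (2 * k').-1 (2 * k').+1
       | (k' < n)%N && is_pair u v (2 * k') (2 * k').+2]].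

Definition ladder_lap (R : numDomainType) (n : nat) : 'M[R]_(2 * n) :=
  \matrix_(i, j)
    (if i == j then (#|[set k | ladder_adj i k]|)%:R
     else - (ladder_adj i j)%:R).

Definition evec (R : numDomainType) (m : nat) (u : 'I_m) : 'cV[R]_m :=
  \col_k (u == k)%:R.

(* r_{L_n}(u,v) = r : when a unit current enters at u and leaves at v
   (i.e. potentials x with L x = e_u - e_v, which exist), the potential
   difference x_u - x_v equals r (for every such potential vector x). *)
Definition ladder_resistance (R : numDomainType) (n : nat) (u v : 'I_(2 * n))
    (r : R) : Prop :=
  (exists x : 'cV[R]_(2 * n), ladder_lap R n *m x = evec R u - evec R v) /\
  (forall x : 'cV[R]_(2 * n),
     ladder_lap R n *m x = evec R u - evec R v -> x u 0 - x v 0 = r).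

(* Main.v *)
Require Import Defs.
From HB Require Import structures.
From mathcomp Require Import all_boot all_order all_algebra zify ring lra.
Import Order.TTheory GRing.Theory Num.Theory.
Local Open Scope ring_scope.
Lemma sum_delta (R : numDomainType) (m c : nat) (h : nat -> R) :
  \sum_(j < m) ((j:nat) == c)%:R * h j = (c < m)%:R * h c.
Proof.
elim: m => [|m IH]; first by rewrite big_ord0 ltn0 mul0r.
rewrite big_ord_recr /= IH.
have [hc|hc|hc] := ltngtP c m.
- by rewrite (ltn_trans hc (ltnSn m)) mul0r addr0.
- have -> : (c < m.+1)%N = false by lia.
  by rewrite !mul0r addr0.
- by rewrite hc ltnSn mul0r add0r.
Qed.

Definition pr (i : nat) : nat := (2 * (i %/ 2) + (1 - i %% 2))%N.
Lemma adjE n (i j : 'I_(2*n)) : ladder_adj i j =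
  [|| (j:nat) == pr i, ((j:nat).+2 == i) | (j:nat) == i.+2].
Proof.
have hi := ltn_ord i; have hj := ltn_ord j.
rewrite /ladder_adj /pr; apply/existsP/idP.
- case=> k /=; have hk := ltn_ord k.
  case/or3P.
  + rewrite /is_pair; case/orP=> /andP[/eqP h1 /eqP h2]; apply/or3P; apply: Or31; apply/eqP; lia.
  + case/andP=> hk1; rewrite /is_pair; case/orP=> /andP[/eqP h1 /eqP h2]; apply/or3P.
    * apply: Or33; apply/eqP; lia.
    * apply: Or32; apply/eqP; lia.
  + case/andP=> hk1; rewrite /is_pair; case/orP=> /andP[/eqP h1 /eqP h2]; apply/or3P.
    * apply: Or33; apply/eqP; lia.
    * apply: Or32; apply/eqP; lia.
- case/or3P=> /eqP h.
  + have hk : (i %/ 2 < n)%N by lia.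
    exists (Ordinal hk); apply/or3P; apply: Or31; rewrite /is_pair /=.
    have [he|ho] : (i %% 2 = 0 \/ i %% 2 = 1)%N by lia.
    * apply/orP; left; apply/andP; split; apply/eqP; lia.
    * apply/orP; right; apply/andP; split; apply/eqP; lia.
  + have hk : (j %/ 2 < n)%N by lia.
    exists (Ordinal hk); rewrite /=.
    have [he|ho] : (j %% 2 = 0 \/ j %% 2 = 1)%N by lia.
    * apply/or3P; apply: Or32; apply/andP; split; first by lia.
      apply/orP; right; apply/andP; split; apply/eqP; lia.
    * apply/or3P; apply: Or33; apply/andP; split; first by lia.
      apply/orP; right; apply/andP; split; apply/eqP; lia.
  + have hk : (i %/ 2 < n)%N by lia.
    exists (Ordinal hk); rewrite /=.
    have [he|ho] : (i %% 2 = 0 \/ i %% 2 = 1)%N by lia.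
    * apply/or3P; apply: Or32; apply/andP; split; first by lia.
      apply/orP; left; apply/andP; split; apply/eqP; lia.
    * apply/or3P; apply: Or33; apply/andP; split; first by lia.
      apply/orP; left; apply/andP; split; apply/eqP; lia.
Qed.

Lemma adj_irr n (i : 'I_(2*n)) : ladder_adj i i = false.
Proof. rewrite adjE /pr; apply/negbTE; apply/negP; case/or3P=> /eqP; lia. Qed.

Lemma adj_sym n (i j : 'I_(2*n)) : ladder_adj i j = ladder_adj j i.
Proof.
rewrite !adjE /pr; have hi := ltn_ord i; have hj := ltn_ord j.
apply/idP/idP; case/or3P=> /eqP h; apply/or3P.
all: first [ (apply: Or31; apply/eqP; lia) | (apply: Or32; apply/eqP; lia) | (apply: Or33; apply/eqP; lia)].
Qed.

Lemma lap_row (R : numDomainType) n (x : 'cV[R]_(2*n)) (i : 'I_(2*n)) :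
  (ladder_lap R n *m x) i 0 = \sum_j (ladder_adj i j)%:R * (x i 0 - x j 0).
Proof.
rewrite !mxE (bigD1 i) //= [RHS](bigD1 i) //= mxE eqxx adj_irr mul0r add0r.
have -> : #|[set k | ladder_adj i k]| = (\sum_j ladder_adj i j)%N.
  by rewrite -sum1_card big_mkcond /=; apply: eq_bigr => k _; rewrite inE; case: ladder_adj.
rewrite natr_sum (bigD1 i) //= adj_irr add0r mulr_suml -big_split /=.
apply: eq_bigr => j hj; rewrite mxE eq_sym (negbTE hj).
by rewrite mulrBr mulNr.
Qed.

Lemma neigh (R : numDomainType) n (i : 'I_(2*n)) (h : nat -> R) :
  \sum_(j < 2*n) (ladder_adj i j)%:R * h j =
  h (pr i) + (2 <= i)%:R * h (i - 2)%N + (i.+2 < 2*n)%:R * h i.+2.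
Proof.
have hi := ltn_ord i.
have hp : (pr i < 2 * n)%N by rewrite /pr; lia.
transitivity (\sum_(j < 2*n) (((j:nat) == pr i)%:R * h j
   + (2 <= i)%:R * (((j:nat) == (i - 2)%N)%:R * h j)
   + ((j:nat) == i.+2)%:R * h j)).
  apply: eq_bigr => j _; rewrite adjE mulrA -natrM.
  rewrite -!mulrDl; congr (_ * _).
  have [e1|e1] := boolP ((j:nat) == pr i).
    have -> : ((j:nat) == i.+2) = false by move: e1; rewrite /pr=> /eqP; lia.
    have -> : ((2 <= i) * ((j:nat) == (i - 2)))%N = 0%N by move: e1; rewrite /pr=> /eqP; lia.
    by rewrite /= addr0 addr0.
  have [e2|e2] := boolP ((j:nat).+2 == i).
    have -> : ((j:nat) == i.+2) = false by move: e2 => /eqP; lia.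
    have -> : ((2 <= i) * ((j:nat) == (i - 2)))%N = 1%N by move: e2 => /eqP; lia.
    by rewrite /= add0r addr0.
  have -> : ((2 <= i) * ((j:nat) == (i - 2)))%N = 0%N by move: e2 => /eqP; lia.
  by rewrite /= mulr0n !add0r.
rewrite !big_split /= -mulr_sumr !sum_delta hp mul1r.
have -> : (i - 2 < 2 * n)%N by lia.
by rewrite mul1r.
Qed.

Lemma uniq_diff (R : realDomainType) n (x y : 'cV[R]_(2*n)) (u v : 'I_(2*n)) :
  ladder_adj u v -> ladder_lap R n *m x = ladder_lap R n *m y ->
  x u 0 - x v 0 = y u 0 - y v 0.
Proof.
move=> huv hxy.
set z := x - y.
have hz0 : ladder_lap R n *m z = 0 by rewrite mulmxBr hxy subrr.
have hz : forall i, \sum_j (ladder_adj i j)%:R * (z i 0 - z j 0) = 0.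
  by move=> i; rewrite -lap_row hz0 mxE.
have E : \sum_i \sum_j (ladder_adj i j)%:R * (z i 0 - z j 0) ^+ 2 = 0.
  transitivity (\sum_i z i 0 * \sum_j (ladder_adj i j)%:R * (z i 0 - z j 0)
     + \sum_i \sum_j (ladder_adj i j)%:R * (z j 0 * (z j 0 - z i 0))).
    rewrite -big_split /=; apply: eq_bigr => i _.
    rewrite mulr_sumr -big_split /=; apply: eq_bigr => j _.
    ring.
  rewrite big1 ?add0r; last by move=> i _; rewrite hz mulr0.
  rewrite exchange_big /=; apply: big1 => j _.
  rewrite -[RHS](mulr0 (z j 0)) -{2}(hz j) mulr_sumr; apply: eq_bigr => i _.
  by rewrite adj_sym mulrCA.
have hpos : forall i : 'I_(2*n), true -> 0 <= \sum_j (ladder_adj i j)%:R * (z i 0 - z j 0) ^+ 2.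
  by move=> i _; apply: sumr_ge0 => j _; rewrite mulr_ge0 ?ler0n ?sqr_ge0.
have hpos2 : forall j : 'I_(2*n), true -> 0 <= (ladder_adj u j)%:R * (z u 0 - z j 0) ^+ 2.
  by move=> j _; rewrite mulr_ge0 ?ler0n ?sqr_ge0.
have h2 := @psumr_eq0P _ _ _ _ hpos E u isT.
have := @psumr_eq0P _ _ _ _ hpos2 h2 v isT; rewrite huv mul1r => /eqP; rewrite sqrf_eq0 subr_eq0 => /eqP.
rewrite /z !mxE => h.
lra.
Qed.

Definition Xf {R : numDomainType} (F : nat -> R) (k : nat) : R :=
  (if (k %% 2 == 1)%N then -1 else 1) * F (k %/ 2)%N.

Lemma Xe {R : numDomainType} (F : nat -> R) k m : k = (2 * m)%N -> Xf F k = F m.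
Proof.
move=> ->; rewrite /Xf.
have -> : ((2 * m) %% 2 = 0)%N by lia.
have -> : ((2 * m) %/ 2 = m)%N by lia.
by rewrite mul1r.
Qed.

Lemma Xo {R : numDomainType} (F : nat -> R) k m : k = (2 * m).+1 -> Xf F k = - F m.
Proof.
move=> ->; rewrite /Xf.
have -> : ((2 * m).+1 %% 2 = 1)%N by lia.
have -> : ((2 * m).+1 %/ 2 = m)%N by lia.
by rewrite mulN1r.
Qed.

Arguments Xe {R} F {k m}.
Arguments Xo {R} F {k m}.

Lemma sol (R : numDomainType) n (c : nat) (hc : (c < n)%N) (F : nat -> R)
  (hF : forall m, (m < n)%N -> F m + F m + (1 <= m)%:R * (F m - F m.-1)
          + (m.+1 < n)%:R * (F m - F m.+1) = (m == c)%:R)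
  (u v : 'I_(2*n)) (hu : (u : nat) = (2 * c)%N) (hv : (v : nat) = (2 * c).+1) :
  ladder_lap R n *m (\col_i Xf F i) = evec R u - evec R v /\
  (\col_i Xf F i) u 0 - (\col_i Xf F i) v 0 = F c + F c.
Proof.
split; last by rewrite !mxE (Xe F hu) (Xo F hv) opprK.
apply/matrixP => i j; rewrite ord1 lap_row.
under eq_bigr => k _ do rewrite !mxE.
rewrite (@neigh R n i (fun k => Xf F i - Xf F k)) !mxE -!val_eqE /= hu hv.
have hi := ltn_ord i.
have [m [e [he hie]]] : exists m e, (e < 2)%N /\ (i : nat) = (2 * m + e)%N.
  by exists (i %/ 2)%N, (i %% 2)%N; split; lia.
have hm : (m < n)%N by lia.
have := hF m hm.
case: e he hie => [|[|//]] _ hie.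
- rewrite (Xe F (k := i) (m := m)) ?(Xo F (k := pr i) (m := m)) ?(Xe F (k := (i - 2)%N) (m := m.-1))
          ?(Xe F (k := i.+2) (m := m.+1)); try by rewrite /pr; lia.
  have -> : (2 <= i)%N = (1 <= m)%N by lia.
  have -> : (i.+2 < 2 * n)%N = (m.+1 < n)%N by lia.
  have -> : ((2 * c)%N == i) = (m == c) by apply/eqP/eqP; lia.
  have -> : ((2 * c).+1 == i) = false by apply/eqP; lia.
  by move=> <-; rewrite /= subr0 opprK.
- case: m hie hm => [|m] hie hm.
  + rewrite (Xo F (k := i) (m := 0)) ?(Xe F (k := pr i) (m := 0)); try by rewrite /pr; lia.
    have -> : (2 <= i)%N = false by lia.
    have -> : ((2 * c)%N == i) = false by apply/eqP; lia.
    have -> : ((2 * c).+1 == i) = (0 == c)%N by apply/eqP/eqP; lia.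
    rewrite ?(Xo F (k := i.+2) (m := 1)); last by lia.
    have -> : (i.+2 < 2 * n)%N = (1 < n)%N by lia.
    move=> <-; rewrite /= !mul0r ?addr0; ring.
  + rewrite (Xo F (k := i) (m := m.+1)) ?(Xe F (k := pr i) (m := m.+1))
          ?(Xo F (k := (i - 2)%N) (m := m)) ?(Xo F (k := i.+2) (m := m.+2)); try by rewrite /pr; lia.
    have -> : (2 <= i)%N = true by lia.
    have -> : (i.+2 < 2 * n)%N = (m.+2 < n)%N by lia.
    have -> : ((2 * c)%N == i) = false by apply/eqP; lia.
    have -> : ((2 * c).+1 == i) = (m.+1 == c) by apply/eqP/eqP; lia.
    move=> <-; rewrite /=; ring.
Qed.

Section Alg.
Variable R : rcfType.
Variable s : R.
Hypothesis hs : s ^+ 2 = 3.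
Definition Qf (k : nat) : R := (s + 1) * (2 + s) ^+ k + (s - 1) * (2 - s) ^+ k.

Lemma a2 k : (2 + s) ^+ k.+2 = (4 * (2 + s) - 1) * (2 + s) ^+ k.
Proof. rewrite !exprS mulrA; congr (_ * _); apply/eqP; rewrite -subr_eq0; apply/eqP.
have -> : (2 + s) * (2 + s) - (4 * (2 + s) - 1) = s ^+ 2 - 3 by ring.
by rewrite hs subrr. Qed.
Lemma b2 k : (2 - s) ^+ k.+2 = (4 * (2 - s) - 1) * (2 - s) ^+ k.
Proof. rewrite !exprS mulrA; congr (_ * _); apply/eqP; rewrite -subr_eq0; apply/eqP.
have -> : (2 - s) * (2 - s) - (4 * (2 - s) - 1) = s ^+ 2 - 3 by ring.
by rewrite hs subrr. Qed.

Lemma QA j : Qf j.+2 = 4 * Qf j.+1 - Qf j.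
Proof. rewrite /Qf a2 b2 !exprS; ring. Qed.
Lemma QB : 3 * Qf 0 - Qf 1 = 0.
Proof. rewrite /Qf !expr0 !expr1; ring. Qed.
Lemma QC j : 3 * Qf j.+1 - Qf j = 2 * ((2 + s) ^+ j.+2 - (2 - s) ^+ j.+2).
Proof.
rewrite /Qf a2 b2 !exprS.
set X := (2 + s) ^+ j; set Y := (2 - s) ^+ j.
apply/eqP; rewrite -subr_eq0; apply/eqP.
have -> : 3 * ((s + 1) * ((2 + s) * X) + (s - 1) * ((2 - s) * Y)) -
  ((s + 1) * X + (s - 1) * Y) - 2 * ((4 * (2 + s) - 1) * X - (4 * (2 - s) - 1) * Y)
  = (3 * X - 3 * Y) * (s ^+ 2 - 3) by ring.
by rewrite hs subrr mulr0.
Qed.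
Lemma QE j : (2 + s) ^+ j.+1 * (s - 1) + (2 - s) ^+ j.+1 * (s + 1) = Qf j.
Proof.
rewrite /Qf !exprS.
set X := (2 + s) ^+ j; set Y := (2 - s) ^+ j.
apply/eqP; rewrite -subr_eq0; apply/eqP.
have -> : (2 + s) * X * (s - 1) + (2 - s) * Y * (s + 1) - ((s + 1) * X + (s - 1) * Y)
   = (X - Y) * (s ^+ 2 - 3) by ring.
by rewrite hs subrr mulr0.
Qed.
Lemma Q0 : Qf 0 = (2 + s) - (2 - s).
Proof. rewrite /Qf !expr0; ring. Qed.
End Alg.

Arguments Qf {R} s k.
Arguments QA {R s} hs j.
Arguments QB {R s}.
Arguments QC {R s} hs j.
Arguments QE {R s} hs j.
Arguments Q0 {R s}.

Lemma Qcore (R : rcfType) (s : R) (hs : s ^+ 2 = 3) n m : (m < n)%N ->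
  Qf s m + Qf s m + (1 <= m)%:R * (Qf s m - Qf s m.-1)
    + (m.+1 < n)%:R * (Qf s m - Qf s m.+1)
  = (m == n.-1)%:R * (2 * ((2 + s) ^+ n - (2 - s) ^+ n)).
Proof.
move=> hm; case: m hm => [|m] hm.
- have [hn|hn] := boolP (1 < n)%N.
  + have -> : (0 == n.-1)%N = false by apply/eqP; lia.
    have e := QB (s := s); rewrite /= !mul0r mul1r addr0; lra.
  + have -> : n = 1%N by lia.
    rewrite /= !mul0r mul1r !addr0 Q0 !expr1; ring.
- have [hn|hn] := boolP (m.+2 < n)%N.
  + have -> : (m.+1 == n.-1) = false by apply/eqP; lia.
    rewrite /= mul0r !mul1r (QA hs m); ring.
  + have -> : (m.+1 == n.-1) = true by apply/eqP; lia.
    have -> : n = m.+2 by lia.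
    have e := QC hs m; rewrite /= mul0r !mul1r addr0; lra.
Qed.

Lemma flip (R : numDomainType) n (G : nat -> R)
  (hG : forall k, (k < n)%N -> G k + G k + (1 <= k)%:R * (G k - G k.-1)
          + (k.+1 < n)%:R * (G k - G k.+1) = (k == n.-1)%:R) :
  forall m, (m < n)%N ->
    G (n.-1 - m)%N + G (n.-1 - m)%N + (1 <= m)%:R * (G (n.-1 - m)%N - G (n.-1 - m.-1)%N)
    + (m.+1 < n)%:R * (G (n.-1 - m)%N - G (n.-1 - m.+1)%N) = (m == 0%N)%:R.
Proof.
move=> m hm; have := hG (n.-1 - m)%N ltac:(lia).
have E1 : (1 <= n.-1 - m)%N = (m.+1 < n)%N by lia.
have E2 : ((n.-1 - m).+1 < n)%N = (1 <= m)%N by lia.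
have E3 : ((n.-1 - m)%N == n.-1) = (m == 0%N) by apply/eqP/eqP; lia.
rewrite E1 E2 E3 => <-.
have [h1|h1] := boolP (1 <= m)%N; have [h2|h2] := boolP (m.+1 < n)%N;
  rewrite ?h1 ?h2 ?(negbTE h1) ?(negbTE h2) /= ?mul0r ?addr0.
- have -> : (n.-1 - m.-1)%N = (n.-1 - m).+1 by lia.
  have -> : (n.-1 - m.+1)%N = (n.-1 - m).-1 by lia.
  ring.
- have -> : (n.-1 - m.-1)%N = (n.-1 - m).+1 by lia.
  ring.
- have -> : (n.-1 - m.+1)%N = (n.-1 - m).-1 by lia.
  ring.
- by [].
Qed.

Theorem mainTheorem4 (R : rcfType) (n : nat) (hn : (1 <= n)%N) :
  let s := Num.sqrt (3 : R) in
  let a := 2 + s in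
  let b := 2 - s in
  let rho := (a ^+ n * (s - 1) + b ^+ n * (s + 1)) / (a ^+ n - b ^+ n) in
  (forall u v : 'I_(2 * n)%N, (u.+1 = 1)%N -> (v.+1 = 2)%N ->
     @ladder_resistance R n u v rho) /\
  (forall u v : 'I_(2 * n)%N, (u.+1 = (2 * n).-1)%N -> (v.+1 = 2 * n)%N ->
     @ladder_resistance R n u v rho).
Proof.
move=> s a b rho.
have hs : s ^+ 2 = 3 by rewrite sqr_sqrtr // ler0n.
have s0 : 0 <= s by exact: sqrtr_ge0.
have s1 : 1 < s by nra.
have s2 : s < 2 by nra.
have hD : a ^+ n - b ^+ n != 0.
  have h1 : 1 <= a ^+ n by apply: exprn_ege1; rewrite /a; lra.
  have h2 : b ^+ n < 1 by rewrite exprn_ilt1 /b; [lia | lra | lra].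
  apply/eqP => h; lra.
set D := a ^+ n - b ^+ n in hD.
pose G k := Qf s k / (2 * D).
have hD2 : 2 * D != 0 by rewrite mulf_eq0 negb_or hD andbT (eqr_nat R 2 0).
have hG : forall k, (k < n)%N -> G k + G k + (1 <= k)%:R * (G k - G k.-1)
          + (k.+1 < n)%:R * (G k - G k.+1) = (k == n.-1)%:R.
  move=> k hk; have := @Qcore R s hs n k hk; rewrite -/a -/b -/D => e.
  rewrite /G -[(k == n.-1)%:R](mulfK hD2) -e.
  field; move: hD2; rewrite mulf_eq0 negb_or => /andP[] //.
have hrho : rho = G n.-1 + G n.-1.
  have e : a ^+ n * (s - 1) + b ^+ n * (s + 1) = Qf s n.-1.
    by rewrite -(QE hs n.-1) prednK.
  rewrite /rho /G e -/D; field; move: hD2; rewrite mulf_eq0 negb_or => /andP[] //.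
have key : forall (c : nat) (F : nat -> R) (u v : 'I_(2*n)), (c < n)%N ->
    (forall m, (m < n)%N -> F m + F m + (1 <= m)%:R * (F m - F m.-1)
          + (m.+1 < n)%:R * (F m - F m.+1) = (m == c)%:R) ->
    (u : nat) = (2 * c)%N -> (v : nat) = (2 * c).+1 -> F c + F c = rho ->
    @ladder_resistance R n u v rho.
  move=> c F u v hc hF hu hv hr.
  have [h0 h1] := @sol R n c hc F hF u v hu hv.
  split; first by exists (\col_i Xf F i).
  move=> x hx; rewrite -hr -h1; apply: uniq_diff.
    by rewrite adjE /pr hu hv; apply/or3P; apply: Or31; apply/eqP; lia.
  by rewrite hx h0.
split.
- move=> u v hu hv; apply: (key 0%N (fun m => G (n.-1 - m)%N)) => //.
  + exact: flip.
  + by lia.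
  + by lia.
  + by rewrite subn0.
- move=> u v hu hv; apply: (key n.-1 G) => //; lia.
Qed.
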